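(* Let $\varphi$ be an IPDL-formula all of whose propositional variables are among $p_1,\ldots,p_n$ and all of whose atomic program terms are among $a_1,\ldots,a_l$ ($l\ge 1$). Let $\gamma = a_1\cup\cdots\cup a_l$, let $\cdot'$ be the translation defined in the context (which uses the fresh variable $p_{n+1}$), let $$\Theta = p_{n+1}\wedge [\gamma^*](\langle\gamma\rangle p_{n+1}\rightarrow p_{n+1}),$$ and let $\widehat{\varphi} = \Theta\wedge\varphi'$. Then $\varphi$ is satisfiable if, and only if, $\widehat{\varphi}$ is satisfiable.
   Context: Fix a countable set $\mathit{Var}=\{p_1,p_2,\ldots\}$ of propositional variables and a countable set $AP=\{a_1,a_2,\ldots\}$ of atomic program terms. IPDL formulas $\varphi$ and program terms $\alpha$ are defined simultaneously by $\varphi ::= p \mid \bot \mid (\varphi\rightarrow\varphi)\mid [\alpha]\varphi$ and $\alpha ::= a \mid \varphi? \mid (\alpha;\alpha)\mid(\alpha\cup\alpha)\mid(\alpha\cap\alpha)\mid \alpha^*$, where $p\in\mathit{Var}$, $a\in AP$. The connectives $\neg,\wedge,\vee,\leftrightarrow,\top$ are defined as usual and $\langle\alpha\rangle\psi=\neg[\alpha]\neg\psi$. A Kripke model is $\mathfrak{M}=(S,\{R_a\}_{a\in AP},V)$ with $S$ a nonempty set, each $R_a\subseteq S\times S$, and $V:\mathit{Var}\to 2^S$. Relations for compound programs and the satisfaction relation are defined simultaneously: $(s,t)\in R_{\psi?}$ iff $s=t$ and $\mathfrak{M},s\models\psi$; $R_{\alpha;\beta}$ is the relational composition of $R_\alpha$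 and $R_\beta$; $R_{\alpha\cup\beta}=R_\alpha\cup R_\beta$; $R_{\alpha\cap\beta}=R_\alpha\cap R_\beta$; $R_{\alpha^*}$ is the reflexive transitive closure of $R_\alpha$; $\mathfrak{M},s\models p$ iff $s\in V(p)$; $\mathfrak{M},s\not\models\bot$; $\mathfrak{M},s\models\psi\rightarrow\chi$ iff $\mathfrak{M},s\models\psi$ implies $\mathfrak{M},s\models\chi$; $\mathfrak{M},s\models[\alpha]\psi$ iff $\mathfrak{M},t\models\psi$ for all $t$ with $(s,t)\in R_\alpha$. A formula is satisfiable if it is true at some state of some model. The translation $\cdot'$ (for $\varphi$ as in the claim) is defined recursively: $a_j'=a_j$; $(\alpha;\beta)'=\alpha';\beta'$; $(\alpha\cup\beta)'=\alpha'\cup\beta'$; $(\alpha\cap\beta)'=\alpha'\cap\beta'$; $(\alpha^* )'=(\alpha')^*$; $(\psi?)'=(\psi')?$; $p_i'=p_i$ for $i\le n$; $\bot'=\bot$; $(\psi\rightarrow\chi)'=\psi'\rightarrow\chi'$; $([\alpha]\psi)'=[\alpha'](p_{n+1}\rightarrow\psi')$. *)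

(* Defs.v *)
From Stdlib Require Import Arith Relations.

(* Propositional variable p_{i+1} is represented by [Var i] (i : nat),
   atomic program a_{j+1} by [Atom j] (j : nat). *)
Inductive formula : Type :=
| Var : nat -> formula
| Bot : formula
| Imp : formula -> formula -> formula
| Box : program -> formula -> formula
with program : Type :=
| Atom : nat -> program
| Test : formula -> program
| Seq : program -> program -> program
| Union : program -> program -> program
| Inter : program -> program -> program
| Star : program -> program.

Definition Neg (f : formula) : formula := Imp f Bot.
Definition And (f g : formula) : formula := Neg (Imp f (Neg g)).
Definition Dia (a : program) (f : formula) : formula := Neg (Box a (Neg f)).

Record model : Type := Model {
  state : Type;
  inhabited_state : inhabited state;
  rel : nat -> state -> state -> Prop;
  val : nat -> state -> Prop
}.

Fixpoint sat (M : model) (s : state M) (f : formula) {struct f} : Prop :=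
  match f with
  | Var i => val M i s
  | Bot => False
  | Imp f1 f2 => sat M s f1 -> sat M s f2
  | Box a g => forall t, prel M a s t -> sat M t g
  end
with prel (M : model) (a : program) {struct a} : state M -> state M -> Prop :=
  match a with
  | Atom j => rel M j
  | Test g => fun s t => s = t /\ sat M s g
  | Seq a1 a2 => fun s t => exists u, prel M a1 s u /\ prel M a2 u t
  | Union a1 a2 => fun s t => prel M a1 s t \/ prel M a2 s t
  | Inter a1 a2 => fun s t => prel M a1 s t /\ prel M a2 s t
  | Star a1 => clos_refl_trans (state M) (prel M a1)
  end.

Definition satisfiable (f : formula) : Prop :=
  exists (M : model) (s : state M), sat M s f.

Fixpoint vars_below (n : nat) (f : formula) : Prop :=
  match f with
  | Var i => i < n
  | Bot => True
  | Imp f1 f2 => vars_below n f1 /\ vars_below n f2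
  | Box a g => pvars_below n a /\ vars_below n g
  end
with pvars_below (n : nat) (a : program) : Prop :=
  match a with
  | Atom _ => True
  | Test g => vars_below n g
  | Seq a1 a2 | Union a1 a2 | Inter a1 a2 => pvars_below n a1 /\ pvars_below n a2
  | Star a1 => pvars_below n a1
  end.

Fixpoint atoms_below (l : nat) (f : formula) : Prop :=
  match f with
  | Var _ => True
  | Bot => True
  | Imp f1 f2 => atoms_below l f1 /\ atoms_below l f2
  | Box a g => patoms_below l a /\ atoms_below l g
  end
with patoms_below (l : nat) (a : program) : Prop :=
  match a with
  | Atom j => j < l
  | Test g => atoms_below l g
  | Seq a1 a2 | Union a1 a2 | Inter a1 a2 => patoms_below l a1 /\ patoms_below l a2
  | Star a1 => patoms_below l a1
  end.

(* gamma l = a_1 U ... U a_l (left-associated), meaningful for l >= 1. *)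
Fixpoint gamma (l : nat) : program :=
  match l with
  | 0 => Atom 0
  | S k => match k with
           | 0 => Atom 0
           | S _ => Union (gamma k) (Atom k)
           end
  end.

(* The translation ' ; the fresh variable p_{n+1} is [Var n]. *)
Fixpoint tr (n : nat) (f : formula) : formula :=
  match f with
  | Var i => Var i
  | Bot => Bot
  | Imp f1 f2 => Imp (tr n f1) (tr n f2)
  | Box a g => Box (ptr n a) (Imp (Var n) (tr n g))
  end
with ptr (n : nat) (a : program) : program :=
  match a with
  | Atom j => Atom j
  | Test g => Test (tr n g)
  | Seq a1 a2 => Seq (ptr n a1) (ptr n a2)
  | Union a1 a2 => Union (ptr n a1) (ptr n a2)
  | Inter a1 a2 => Inter (ptr n a1) (ptr n a2)
  | Star a1 => Star (ptr n a1)
  end.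

Definition Theta (n l : nat) : formula :=
  And (Var n) (Box (Star (gamma l)) (Imp (Dia (gamma l) (Var n)) (Var n))).

Definition hat (n l : nat) (f : formula) : formula := And (Theta n l) (tr n f).

(* Main.v *)
Require Import Defs.
From Stdlib Require Import Arith Relations Lia Classical ProofIrrelevance.

Scheme formula_ind2 := Induction for formula Sort Prop
with program_ind2 := Induction for program Sort Prop.
Combined Scheme fp_ind from formula_ind2, program_ind2.

Lemma crt_mono (T : Type) (R S : T -> T -> Prop) :
  (forall x y, R x y -> S x y) -> forall x y, clos_refl_trans T R x y -> clos_refl_trans T S x y.
Proof.
  intros H x y Hc; induction Hc.
  - apply rt_step; auto.
  - apply rt_refl.
  - eapply rt_trans; eauto.
Qed.

Definition Mfull (M : model) (n : nat) : model :=
  Model (state M) (inhabited_state M) (rel M)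
    (fun i t => if Nat.eq_dec i n then True else val M i t).

Lemma full_equiv (M : model) (n : nat) :
  (forall f, vars_below n f -> forall t, sat (Mfull M n) t (tr n f) <-> sat M t f) /\
  (forall a, pvars_below n a -> forall t u, prel (Mfull M n) (ptr n a) t u <-> prel M a t u).
Proof.
  apply fp_ind; simpl; intros.
  - destruct (Nat.eq_dec n0 n); [lia|tauto].
  - tauto.
  - destruct H1. rewrite (H H1 t), (H0 H2 t). tauto.
  - destruct H1. split.
    + intros Hb u Hp. apply (H0 H2 u). apply Hb. apply (H H1); auto.
      destruct (Nat.eq_dec n n); [auto|congruence].
    + intros Hb u Hp _. apply (H0 H2 u). apply Hb. apply (H H1); auto.
  - tauto.
  - rewrite (H H0 t). tauto.
  - destruct H1. split; intros [w [h1 h2]]; exists w;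
      split; [apply (H H1)|apply (H0 H2)| apply (H H1)|apply (H0 H2)]; auto.
  - destruct H1. rewrite (H H1), (H0 H2). tauto.
  - destruct H1. rewrite (H H1), (H0 H2). tauto.
  - split; apply crt_mono; intros; apply (H H0); auto.
Qed.

Lemma gamma_step (M : model) (l j : nat) (t u : state M) :
  1 <= l -> j < l -> rel M j t u -> prel M (gamma l) t u.
Proof.
  intros Hl; revert j; induction l as [|k IH]; intros j Hj Hr; [lia|].
  destruct k as [|k'].
  - simpl. assert (j = 0) by lia. subst; auto.
  - change (prel M (gamma (S k')) t u \/ rel M (S k') t u).
    destruct (Nat.eq_dec j (S k')); [subst; right; auto|].
    left. apply (IH ltac:(lia) j); auto; lia.
Qed.

Section Sub.
Variables (M : model) (n l : nat) (s : state M).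
Definition reach (t : state M) := clos_refl_trans (state M) (prel M (gamma l)) s t.
Hypothesis Hl : 1 <= l.
Hypothesis HTh : forall t, reach t ->
  sat M t (Imp (Dia (gamma l) (Var n)) (Var n)).

Lemma key_lemma : forall a, patoms_below l a -> forall t u,
  prel M (ptr n a) t u -> reach t -> reach u /\ (val M n u -> val M n t).
Proof.
  induction a; simpl; intros Ha t u Hp Hr.
  - split.
    + eapply rt_trans; [exact Hr|]. apply rt_step. eapply gamma_step; eauto.
    + intros Hv. apply (HTh t Hr). simpl. intros Hb. apply (Hb u); auto.
      eapply gamma_step; eauto.
  - destruct Hp; subst; auto.
  - destruct Ha, Hp as [w [h1 h2]].
    destruct (IHa1 H t w h1 Hr). destruct (IHa2 H0 w u h2 H1). auto.
  - destruct Ha, Hp; [apply (IHa1 H t u)|apply (IHa2 H0 t u)]; auto.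
  - destruct Ha, Hp; apply (IHa1 H t u); auto.
  - induction Hp.
    + apply (IHa Ha x y); auto.
    + auto.
    + destruct (IHHp1 Hr). destruct (IHHp2 H). auto.
Qed.

Definition Nst := { t : state M | reach t /\ val M n t }.
Hypothesis Hs : val M n s.
Definition Nsub : model :=
  Model Nst (inhabits (exist _ s (conj (rt_refl _ _ s) Hs)))
    (fun j x y => rel M j (proj1_sig x) (proj1_sig y))
    (fun i x => val M i (proj1_sig x)).

Lemma proj_inj (x y : Nst) : proj1_sig x = proj1_sig y -> x = y.
Proof.
  destruct x, y; simpl; intros; subst. f_equal. apply proof_irrelevance.
Qed.

Lemma sub_equiv :
  (forall f, atoms_below l f -> forall x, sat Nsub x f <-> sat M (proj1_sig x) (tr n f)) /\
  (forall a, patoms_below l a -> forall x y,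
      prel Nsub a x y <-> prel M (ptr n a) (proj1_sig x) (proj1_sig y)).
Proof.
  apply fp_ind; simpl; intros.
  - tauto.
  - tauto.
  - destruct H1. rewrite (H H1 x), (H0 H2 x). tauto.
  - destruct H1. split.
    + intros Hb u Hp Hv.
      destruct (proj2_sig x) as [Hrx _].
      destruct (key_lemma p H1 _ _ Hp Hrx) as [Hru _].
      set (y := exist _ u (conj Hru Hv) : Nst).
      apply (H0 H2 y). apply Hb. apply (H H1). exact Hp.
    + intros Hb y Hp. apply (H0 H2 y). apply Hb.
      apply (H H1); auto. destruct (proj2_sig y); auto.
  - tauto.
  - rewrite <- (H H0 x). split.
    + intros [-> h]; auto.
    + intros [e h]. apply proj_inj in e. subst; auto.
  - destruct H1. split.
    + intros [w [h1 h2]]. exists (proj1_sig w).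
      split; [apply (H H1)|apply (H0 H2)]; auto.
    + intros [w [h1 h2]].
      destruct (proj2_sig x) as [Hrx _]. destruct (proj2_sig y) as [_ Hvy].
      destruct (key_lemma p H1 _ _ h1 Hrx) as [Hrw _].
      destruct (key_lemma p0 H2 _ _ h2 Hrw) as [_ Hvw].
      exists (exist _ w (conj Hrw (Hvw Hvy))).
      split; [apply (H H1)|apply (H0 H2)]; auto.
  - destruct H1. rewrite (H H1), (H0 H2). tauto.
  - destruct H1. rewrite (H H1), (H0 H2). tauto.
  - split.
    + intros Hc. induction Hc.
      * apply rt_step. apply (H H0); auto.
      * apply rt_refl.
      * eapply rt_trans; eauto.
    + intros Hc. apply clos_rt_rt1n in Hc.
      remember (proj1_sig x) as t. remember (proj1_sig y) as u.
      revert x y Heqt Hequ. induction Hc; intros x' y' E1 E2.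
      * subst. rewrite (proj_inj _ _ E2). apply rt_refl.
      * destruct (proj2_sig x') as [Hrx _]. destruct (proj2_sig y') as [_ Hvy].
        rewrite <- E1 in Hrx. rewrite <- E2 in Hvy.
        destruct (key_lemma p H0 _ _ H1 Hrx) as [Hrw _].
        assert (Hp2 : prel M (ptr n (Star p)) y z) by (apply clos_rt1n_rt; auto).
        destruct (key_lemma (Star p) H0 _ _ Hp2 Hrw) as [_ Hvw].
        set (w := exist _ y (conj Hrw (Hvw Hvy)) : Nst).
        apply rt_trans with w.
        -- apply rt_step. apply (H H0). simpl. rewrite <- E1. exact H1.
        -- apply (IHHc w y'); auto.
Qed.
End Sub.

Theorem lemma1 (n l : nat) (phi : formula) :
  1 <= l -> vars_below n phi -> atoms_below l phi ->
  (satisfiable phi <-> satisfiable (hat n l phi)).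
Proof.
  intros Hl Hv Ha. split.
  - intros [M [s Hs]]. exists (Mfull M n), s.
    simpl. intros Hc. apply Hc.
    + intros Hc2. apply Hc2; simpl.
      * unfold Mfull; simpl; destruct (Nat.eq_dec n n); [exact I|congruence].
      * intros t _ _. unfold Mfull; simpl; destruct (Nat.eq_dec n n); [exact I|congruence].
    + apply (proj1 (full_equiv M n) phi Hv s). auto.
  - intros [M [s Hs]]. simpl in Hs.
    assert (HT : sat M s (Theta n l)) by (apply NNPP; intro H; apply Hs; intros; contradiction).
    assert (Hp : sat M s (tr n phi)) by (apply NNPP; intro H; apply Hs; intros; contradiction).
    simpl in HT.
    assert (Hvs : val M n s) by (apply NNPP; intro H; apply HT; intros; contradiction).
    assert (Hbox : forall t, clos_refl_trans (state M) (prel M (gamma l)) s t ->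
       sat M t (Imp (Dia (gamma l) (Var n)) (Var n))).
    { apply NNPP; intro H; apply HT; intros _ Hb; apply H; exact Hb. }
    exists (Nsub M n l s Hvs), (exist _ s (conj (rt_refl _ _ s) Hvs)).
    apply (proj1 (sub_equiv M n l s Hl Hbox Hvs) phi Ha). exact Hp.
Qed.
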